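(* Let $n>3$ and consider the complex Poisson algebras with basis $e_1,\dots,e_n$ in which $e_i\cdot e_j=e_{i+j}$ for $2\le i+j\le n-1$, with the listed further nonzero products (up to commutativity/anticommutativity): $\mathcal{P}_{1,1}^n$: none; $\mathcal{P}_{1,2}^n$: $\{e_1,e_n\}=e_n$; $\mathcal{P}_{1,3}^n$: $\{e_1,e_n\}=e_{n-1}$; $\mathcal{P}_{1,4}^n$: $e_n\cdot e_n=e_{n-1}$; $\mathcal{P}_{1,5}^n$: $e_n\cdot e_n=e_{n-1}$, $\{e_1,e_n\}=e_{n-1}$. Let $\varphi$ be a derivation of $\mathcal{P}$. Then, for $2\le i\le n-1$: (a) if $\mathcal{P}=\mathcal{P}_{1,1}^n$: $\varphi(e_1)=\sum_{k=1}^n\lambda_{k,1}e_k$, $\varphi(e_i)=\sum_{k=i}^{n-1}i\lambda_{k-i+1,1}e_k$, $\varphi(e_n)=\lambda_{n-1,n}e_{n-1}+\lambda_{n,n}e_n$ for some $\lambda_{k,1},\lambda_{n-1,n},\lambda_{n,n}\in\mathbb{C}$, and $\dim\mathfrak{Der}(\mathcal{P}_{1,1}^n)=n+2$; (b) if $\mathcal{P}=\mathcal{P}_{1,2}^n$: $\varphi(e_1)=\sum_{k=2}^n\lambda_{k,1}e_k$, $\varphi(e_i)=\sum_{k=i+1}^{n-1}i\lambda_{k-i+1,1}e_k$, $\varphi(e_n)=\lambda_{n,n}e_n$ for some $\lambda_{k,1},\lambda_{n,n}\in\mathbb{C}$, and $\dim\mathfrak{Der}(\mathcal{P}_{1,2}^n)=n$;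 (c) if $\mathcal{P}=\mathcal{P}_{1,3}^n$: $\varphi(e_1)=\sum_{k=1}^n\lambda_{k,1}e_k$, $\varphi(e_i)=\sum_{k=i}^{n-1}i\lambda_{k-i+1,1}e_k$, $\varphi(e_n)=\lambda_{n-1,n}e_{n-1}+(n-2)\lambda_{1,1}e_n$ for some $\lambda_{k,1},\lambda_{n-1,n}\in\mathbb{C}$, and $\dim\mathfrak{Der}(\mathcal{P}_{1,3}^n)=n+1$; (d) if $\mathcal{P}=\mathcal{P}_{1,4}^n$: $\varphi(e_1)=\sum_{k=1}^n\lambda_{k,1}e_k$, $\varphi(e_i)=\sum_{k=i}^{n-1}i\lambda_{k-i+1,1}e_k$, $\varphi(e_n)=-\lambda_{n,1}e_{n-2}+\lambda_{n-1,n}e_{n-1}+\frac{n-1}{2}\lambda_{1,1}e_n$ for some $\lambda_{k,1},\lambda_{n-1,n}\in\mathbb{C}$, and $\dim\mathfrak{Der}(\mathcal{P}_{1,4}^n)=n+1$; (e) if $\mathcal{P}=\mathcal{P}_{1,5}^n$: $\varphi(e_1)=\sum_{k=2}^n\lambda_{k,1}e_k$, $\varphi(e_i)=\sum_{k=i+1}^{n-1}i\lambda_{k-i+1,1}e_k$, $\varphi(e_n)=-\lambda_{n,1}e_{n-2}+\lambda_{n-1,n}e_{n-1}$ for some $\lambda_{k,1},\lambda_{n-1,n}\in\mathbb{C}$, and $\dim\mathfrak{Der}(\mathcal{P}_{1,5}^n)=n$.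
   Context: A derivation of a Poisson algebra $(\mathcal{P},\cdot,\{-,-\})$ is a linear map $\varphi$ with $\varphi(x\cdot y)=\varphi(x)\cdot y+x\cdot\varphi(y)$ and $\varphi(\{x,y\})=\{\varphi(x),y\}+\{x,\varphi(y)\}$ for all $x,y$; $\mathfrak{Der}(\mathcal{P})$ is the Lie algebra of derivations. Indices $k$ in $\lambda_{k,1}$ range over the values appearing in the sums. *)

(* Defs.v *)
From mathcomp Require Import all_boot all_order all_algebra.
From mathcomp Require Import complex Rstruct.
Set Implicit Arguments. Unset Strict Implicit. Unset Printing Implicit Defensive.
Import GRing.Theory.
Local Open Scope ring_scope.

Definition C : numClosedFieldType := (Rdefinitions.R)[i].

(* Vectors of the n-dimensional algebra are row vectors of coordinates with
   respect to the basis e_1, ..., e_n.  Basis vector e_k (1-based, as in the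
   paper); e k = 0 when k = 0 or k > n (never used for such k in the tables
   except where the paper's product is zero). *)
Definition e (n k : nat) : 'rV[C]_n := \row_(j < n) (j.+1 == k)%:R.

Definition bil (n : nat) (m : nat -> nat -> 'rV[C]_n) (x y : 'rV[C]_n)
  : 'rV[C]_n :=
  \sum_(i < n) \sum_(j < n) (x 0 i * y 0 j) *: m i.+1 j.+1.

Inductive kind := P11 | P12 | P13 | P14 | P15.

Definition dotb (n : nat) (p : kind) (i j : nat) : 'rV[C]_n :=
  if (i + j <= n.-1)%N then e n (i + j)
  else if (i == n) && (j == n) && (match p with P14 | P15 => true | _ => false end)
  then e n n.-1
  else 0.

Definition br1n (n : nat) (p : kind) : 'rV[C]_n :=
  match p with
  | P11 => 0
  | P12 => e n n
  | P13 => e n n.-1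
  | P14 => 0
  | P15 => e n n.-1
  end.

Definition brb (n : nat) (p : kind) (i j : nat) : 'rV[C]_n :=
  if (i == 1%N) && (j == n) then br1n n p
  else if (i == n) && (j == 1%N) then - br1n n p
  else 0.

Definition pdot (n : nat) (p : kind) := bil (dotb n p).
Definition pbr (n : nat) (p : kind) := bil (brb n p).

(* A linear map phi is represented by its matrix A: phi(x) = x *m A.
   phi is a derivation of the Poisson algebra. *)
Definition is_derivation (n : nat) (p : kind) (A : 'M[C]_n) : Prop :=
  (forall x y, pdot p x y *m A = pdot p (x *m A) y + pdot p x (y *m A)) /\
  (forall x y, pbr p x y *m A = pbr p (x *m A) y + pbr p x (y *m A)).

Definition dim_Der (n : nat) (p : kind) (d : nat) : Prop :=
  exists U : {vspace 'M[C]_n},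
    (forall A, is_derivation p A <-> A \in U) /\ \dim U = d.

Definition phi_e (n : nat) (A : 'M[C]_n) (k : nat) : 'rV[C]_n := e n k *m A.

(* Main.v *)
Require Import Defs.
From HB Require Import structures.
From mathcomp Require Import all_boot all_order all_algebra.
From mathcomp Require Import complex Rstruct.
From mathcomp Require Import zify ring.
Import GRing.Theory Num.Theory.
Local Open Scope ring_scope.
Set Implicit Arguments. Unset Strict Implicit. Unset Printing Implicit Defensive.

Section Main.
Variable m : nat.
Local Notation n := m.+4.

Lemma eE k (j : 'I_n) : e n k 0 j = (j.+1 == k)%:R.
Proof. by rewrite mxE. Qed.

Lemma sum_delta (F : 'I_n -> C) (K : nat) (G : bool) :
  \sum_(i < n) F i * ((i == K :> nat) && G)%:R = if G && (K < n)%N then F (inord K) else 0.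
Proof.
case: G; last by rewrite big1 // => i _; rewrite andbF mulr0.
case: (ltnP K n) => hK /=.
  rewrite (bigD1 (inord K)) //= big1 ?addr0.
    by rewrite inordK // eqxx mulr1.
  move=> i hi; rewrite andbT; case: eqP => [h|]; last by rewrite mulr0.
  by move: hi; rewrite -h inord_val eqxx.
rewrite big1 // => i _; rewrite andbT; case: eqP => [h|]; last by rewrite mulr0.
by move: (ltn_ord i); rewrite h ltnNge hK.
Qed.

Definition f (A : 'M[C]_n) (x y : nat) : C := A (inord x) (inord y).

Lemma fE (A : 'M[C]_n) (i j : 'I_n) : A i j = f A i j.
Proof. by rewrite /f !inord_val. Qed.

Definition cond mt (A : 'M[C]_n) (a b c : 'I_n) :=
  \sum_(k < n) (mt a.+1 b.+1 : 'rV[C]_n) 0 k * A k c =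
  \sum_(i < n) A a i * (mt i.+1 b.+1 : 'rV[C]_n) 0 c +
  \sum_(j < n) A b j * (mt a.+1 j.+1 : 'rV[C]_n) 0 c.

Lemma bilE mt (x y : 'rV[C]_n) c :
  bil mt x y 0 c = \sum_(i < n) \sum_(j < n) x 0 i * y 0 j * (mt i.+1 j.+1) 0 c.
Proof. by rewrite /bil summxE; apply: eq_bigr => i _; rewrite summxE; apply: eq_bigr => j _; rewrite mxE. Qed.

Lemma bil_dl mt a (y : 'rV[C]_n) :
  bil mt (delta_mx 0 a) y = \sum_(j < n) y 0 j *: mt a.+1 j.+1.
Proof.
rewrite /bil (bigD1 a) //= [X in _ + X]big1 ?addr0 => [|i ne].
  by apply: eq_bigr => j _; rewrite mxE !eqxx mul1r.
by rewrite big1 // => j _; rewrite mxE (negbTE ne) mul0r scale0r.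
Qed.

Lemma bil_dr mt b (x : 'rV[C]_n) :
  bil mt x (delta_mx 0 b) = \sum_(i < n) x 0 i *: mt i.+1 b.+1.
Proof.
rewrite /bil; apply: eq_bigr => i _.
rewrite (bigD1 b) //= [X in _ + X]big1 ?addr0 => [|j ne].
  by rewrite mxE !eqxx mulr1.
by rewrite mxE (negbTE ne) mulr0 scale0r.
Qed.

Lemma bil_dd mt a b :
  bil mt (delta_mx 0 a) (delta_mx 0 b) = mt a.+1 b.+1 :> 'rV[C]_n.
Proof.
rewrite bil_dl (bigD1 b) //= [X in _ + X]big1 ?addr0 => [|j ne].
  by rewrite mxE !eqxx scale1r.
by rewrite mxE (negbTE ne) scale0r.
Qed.

Lemma der_iff mt A :
  (forall x y, bil mt x y *m A = bil mt (x *m A) y + bil mt x (y *m A)) <->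
  (forall a b c, cond mt A a b c).
Proof.
split.
  move=> H a b c; move: (H (delta_mx 0 a) (delta_mx 0 b)) => /rowP /(_ c).
  rewrite -!rowE bil_dd bil_dr bil_dl !mxE /cond => ->.
  rewrite !summxE; congr (_ + _); apply: eq_bigr => i _; rewrite !mxE //.
move=> H x y; apply/rowP => c; rewrite !mxE.
have -> : \sum_(k < n) bil mt x y 0 k * A k c =
   \sum_(i < n) \sum_(j < n) x 0 i * y 0 j * \sum_(k < n) (mt i.+1 j.+1) 0 k * A k c.
  under eq_bigr do rewrite bilE big_distrl /=.
  rewrite exchange_big; apply: eq_bigr => i _.
  under eq_bigr do rewrite big_distrl /=.
  rewrite exchange_big; apply: eq_bigr => j _.
  rewrite big_distrr; apply: eq_bigr => k _ /=; by rewrite mulrA.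
under eq_bigr do under eq_bigr do rewrite H mulrDr.
rewrite !bilE.
have T1 : \sum_(i < n) \sum_(j < n) (x *m A) 0 i * y 0 j * mt i.+1 j.+1 0 c =
  \sum_(i < n) \sum_(j < n) x 0 i * y 0 j * \sum_(k < n) A i k * mt k.+1 j.+1 0 c.
  under eq_bigr do under eq_bigr do rewrite mxE !big_distrl /=.
  under eq_bigr do rewrite exchange_big /=.
  rewrite exchange_big; apply: eq_bigr => l _.
  rewrite exchange_big; apply: eq_bigr => j _.
  rewrite big_distrr; apply: eq_bigr => i _ /=. ring.
have T2 : \sum_(i < n) \sum_(j < n) x 0 i * (y *m A) 0 j * mt i.+1 j.+1 0 c =
  \sum_(i < n) \sum_(j < n) x 0 i * y 0 j * \sum_(k < n) A j k * mt i.+1 k.+1 0 c.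
  apply: eq_bigr => i _.
  under eq_bigr do rewrite mxE big_distrr big_distrl /=.
  rewrite exchange_big; apply: eq_bigr => j _.
  rewrite big_distrr; apply: eq_bigr => k _ /=. ring.
rewrite T1 T2 -big_split; apply: eq_bigr => i _; rewrite -big_split //.
Qed.

Lemma sum_deltaP (F : 'I_n -> C) (P : 'I_n -> bool) (K : nat) (G : bool) :
  (forall i : 'I_n, P i = ((i == K :> nat) && G)) -> (G -> K < n)%N ->
  \sum_(i < n) F i * (P i)%:R = if G then F (inord K) else 0.
Proof.
move=> HP HG; under eq_bigr do rewrite HP; rewrite sum_delta.
clear HP; by case: G HG => //= ->.
Qed.

Lemma sum_deltaP' (F : 'I_n -> C) (P : 'I_n -> bool) (K : nat) (G : bool) :
  (forall i : 'I_n, P i = ((i == K :> nat) && G)) -> (G -> K < n)%N ->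
  \sum_(i < n) (P i)%:R * F i = if G then F (inord K) else 0.
Proof.
move=> HP HG; rewrite -(sum_deltaP F HP HG); by apply: eq_bigr => i _; rewrite mulrC.
Qed.

Definition isS (p : kind) := match p with P14 | P15 => true | _ => false end.

Lemma dotbC p i j : dotb n p i j = dotb n p j i.
Proof. by rewrite /dotb addnC [(j == n) && _]andbC. Qed.

Lemma dotb_coord p (i j k : nat) : (k < n)%N ->
  (dotb n p i.+1 j.+1) 0 (inord k) =
  ((i + j + 1 <= m.+2) && (k == i + j + 1))%N%:R +
  ((isS p) && (i == m.+3) && (j == m.+3) && (k == m.+2))%N%:R.
Proof.
move=> hk; rewrite /dotb /=.
case: ifP => h1.
  rewrite eE inordK // (_ : isS p && _ = false) ?addr0; last by lia.
  by congr (_%:R); lia.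
have -> : ((i + j + 1 <= m.+2) && (k == i + j + 1))%N = false by lia.
rewrite add0r.
case: ifP => h2.
  rewrite eE inordK //. have -> : isS p = true by case: p h2 => //=; rewrite andbF.
  by congr (_%:R); lia.
have -> : (isS p && (i == m.+3) && (j == m.+3) && (k == m.+2))%N = false.
  by case: p h2 => //=; rewrite ?andbT ?andbF //; lia.
by rewrite /= (_ : (0 : 'rV[C]_n) = const_mx 0) // mxE.
Qed.

Lemma dotb_coordO p (i j : nat) (k : 'I_n) :
  (dotb n p i.+1 j.+1) 0 k =
  ((i + j + 1 <= m.+2) && (k == i + j + 1 :> nat))%N%:R +
  ((isS p) && (i == m.+3) && (j == m.+3) && (k == m.+2 :> nat))%N%:R.
Proof. by have := dotb_coord p i j (ltn_ord k); rewrite inord_val. Qed.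

Lemma fEl (A : 'M[C]_n) K (c : 'I_n) : A (inord K) c = f A K c.
Proof. by rewrite /f inord_val. Qed.
Lemma fEr (A : 'M[C]_n) K (a : 'I_n) : A a (inord K) = f A a K.
Proof. by rewrite /f inord_val. Qed.

Definition DotC (S : bool) (g : nat -> nat -> C) (a b c : nat) : Prop :=
  (if (a + b + 1 <= m.+2)%N then g (a + b + 1)%N c else 0) +
  (if (S && (a == m.+3) && (b == m.+3))%N then g m.+2 c else 0)
  = ((if ((b + 1 <= c) && (c <= m.+2))%N then g a (c - b - 1)%N else 0) +
     (if (S && (b == m.+3) && (c == m.+2))%N then g a m.+3 else 0)) +
    ((if ((a + 1 <= c) && (c <= m.+2))%N then g b (c - a - 1)%N else 0) +
     (if (S && (a == m.+3) && (c == m.+2))%N then g b m.+3 else 0)).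

Lemma dot_cond p A (a b c : 'I_n) : cond (dotb n p) A a b c <-> DotC (isS p) (f A) a b c.
Proof.
have ha := ltn_ord a; have hb := ltn_ord b; have hc := ltn_ord c.
rewrite /cond /DotC.
under eq_bigr do rewrite dotb_coordO mulrDl.
rewrite big_split /=.
rewrite (@sum_deltaP' _ _ (a + b + 1)%N ((a + b + 1 <= m.+2))%N); first last.
- by lia.
- by move=> k; have := ltn_ord k; lia.
rewrite (@sum_deltaP' _ _ m.+2 ((isS p) && ((a:nat) == m.+3) && ((b:nat) == m.+3))%N); first last.
- by lia.
- by move=> k; have := ltn_ord k; lia.
under eq_bigr do rewrite dotb_coordO mulrDr.
rewrite big_split /=.
rewrite (@sum_deltaP _ _ (c - b - 1)%N ((b + 1 <= c) && (c <= m.+2))%N); first last.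
- by lia.
- by move=> k; have := ltn_ord k; lia.
rewrite (@sum_deltaP _ _ m.+3 ((isS p) && ((b:nat) == m.+3) && ((c:nat) == m.+2))%N); first last.
- by lia.
- by move=> k; have := ltn_ord k; lia.
under eq_bigr do rewrite dotbC dotb_coordO mulrDr.
rewrite big_split /=.
rewrite (@sum_deltaP _ _ (c - a - 1)%N ((a + 1 <= c) && (c <= m.+2))%N); first last.
- by lia.
- by move=> k; have := ltn_ord k; lia.
rewrite (@sum_deltaP _ _ m.+3 ((isS p) && ((a:nat) == m.+3) && ((c:nat) == m.+2))%N); first last.
- by lia.
- by move=> k; have := ltn_ord k; lia.
by rewrite !fEl !fEr.
Qed.

Definition Tp (p : kind) := match p with P12 | P13 | P15 => true | _ => false end.
Definition tp (p : kind) : nat := match p with P12 => m.+3 | _ => m.+2 end.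

Lemma tp_lt p : (tp p < n)%N. Proof. by case: p. Qed.

Lemma br_coord p (k : 'I_n) : (br1n n p) 0 k = (Tp p && (k == tp p :> nat))%:R.
Proof.
have hk := ltn_ord k.
case: p => /=; rewrite ?eE; try (by congr (_%:R); lia);
  by rewrite (_ : (0 : 'rV[C]_n) = const_mx 0) // mxE.
Qed.

Lemma brb_coord p (i j : nat) (k : 'I_n) :
  (brb n p i.+1 j.+1) 0 k =
  (((i == 0) && (j == m.+3))%N%:R - ((i == m.+3) && (j == 0))%N%:R) * (br1n n p) 0 k.
Proof.
rewrite /brb /=.
case: ifP => h1.
  have E1 : ((i == 0) && (j == m.+3))%N = true by lia.
  have E2 : ((i == m.+3) && (j == 0))%N = false by lia.
  by rewrite ?E1 ?E2 subr0 mul1r.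
have E1 : ((i == 0) && (j == m.+3))%N = false by lia.
case: ifP => h2.
  have E2 : ((i == m.+3) && (j == 0))%N = true by lia.
  by rewrite ?E1 ?E2 sub0r mulN1r mxE.
have E2 : ((i == m.+3) && (j == 0))%N = false by lia.
by rewrite ?E1 ?E2 subr0 mul0r (_ : (0 : 'rV[C]_n) = const_mx 0) // mxE.
Qed.

Definition BrC (T : bool) (t : nat) (g : nat -> nat -> C) (a b c : nat) : Prop :=
  (((a == 0) && (b == m.+3))%N%:R - ((a == m.+3) && (b == 0))%N%:R) * (if T then g t c else 0)
  = (T && (c == t))%:R *
    (((if b == m.+3 then g a 0 else 0) - (if b == 0 then g a m.+3 else 0)) +
     ((if a == 0 then g b m.+3 else 0) - (if a == m.+3 then g b 0 else 0))).

Lemma br_cond p A (a b c : 'I_n) : cond (brb n p) A a b c <-> BrC (Tp p) (tp p) (f A) a b c.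
Proof.
have ha := ltn_ord a; have hb := ltn_ord b; have hc := ltn_ord c.
have ht := tp_lt p.
rewrite /cond /BrC.
under eq_bigr do rewrite brb_coord -mulrA.
rewrite -big_distrr /=.
under eq_bigr do rewrite br_coord.
rewrite (@sum_deltaP' _ _ (tp p) (Tp p)); first last.
- by [].
- by move=> k; rewrite andbC.
under eq_bigr do rewrite brb_coord mulrA mulrC.
rewrite -big_distrr /=.
under [X in _ = _ + X]eq_bigr do rewrite brb_coord mulrA mulrC.
rewrite -big_distrr /= -mulrDr br_coord.
under eq_bigr do rewrite mulrBr.
rewrite sumrB.
rewrite (@sum_deltaP _ _ 0 ((b:nat) == m.+3)); first last.
- by [].
- by move=> k; have := ltn_ord k; lia.
rewrite (@sum_deltaP _ _ m.+3 ((b:nat) == 0)); first last.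
- by [].
- by move=> k; have := ltn_ord k; lia.
under eq_bigr do rewrite mulrBr.
rewrite sumrB.
rewrite (@sum_deltaP _ _ m.+3 ((a:nat) == 0)); first last.
- by [].
- by move=> k; have := ltn_ord k; lia.
rewrite (@sum_deltaP _ _ 0 ((a:nat) == m.+3)); first last.
- by [].
- by move=> k; have := ltn_ord k; lia.
by rewrite !fEl !fEr.
Qed.

Lemma deriv_iff p A : is_derivation p A <->
  (forall a b c, (a < n)%N -> (b < n)%N -> (c < n)%N ->
     DotC (isS p) (f A) a b c /\ BrC (Tp p) (tp p) (f A) a b c).
Proof.
rewrite /is_derivation /pdot /pbr !der_iff; split.
  move=> [H1 H2] a b c ha hb hc; split.
    by have := (H1 (Ordinal ha) (Ordinal hb) (Ordinal hc)); rewrite dot_cond.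
  by have := (H2 (Ordinal ha) (Ordinal hb) (Ordinal hc)); rewrite br_cond.
move=> H; split=> a b c.
  by rewrite dot_cond; case: (H a b c (ltn_ord a) (ltn_ord b) (ltn_ord c)).
by rewrite br_cond; case: (H a b c (ltn_ord a) (ltn_ord b) (ltn_ord c)).
Qed.

Definition NF (l : nat -> C) (al be ga : C) (x y : nat) : C :=
  if x == 0%N then l y
  else if x == m.+3 then
    (if y == m.+1 then al else if y == m.+2 then be else if y == m.+3 then ga else 0)
  else if ((x <= y) && (y <= m.+2))%N then (x.+1)%:R * l (y - x)%N else 0.

End Main.



Ltac rif := repeat match goal with |- context[if ?b then _ else _] =>
   lazymatch b with true => fail | false => fail | _ =>
   let E := fresh "E" in
   first [ (have E : b = true by lia); rewrite E; clear E
         | (have E : b = false by lia); rewrite E; clear E ] end end; simpl.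

Section Back.
Variable m : nat.
Local Notation n := m.+4.
Variables (l : nat -> C) (al be ga : C).
Local Notation g := (NF m l al be ga).

Lemma NF_mid x y : (x <= m.+2)%N -> (y <= m.+2)%N ->
  g x y = if (x <= y)%N then (x.+1)%:R * l (y - x)%N else 0.
Proof.
rewrite /NF => hx hy; case: eqP => [->|hx0]; first by rewrite subn0 mul1r.
by case: (leqP x y) => h; rif.
Qed.

Lemma NF_mid_last x : (1 <= x <= m.+2)%N -> g x m.+3 = 0.
Proof. by move=> hx; rewrite /NF; rif. Qed.

Lemma NF_0 y : g 0 y = l y.
Proof. by rewrite /NF. Qed.

Lemma NF_last y : g m.+3 y =
  (if y == m.+1 then al else if y == m.+2 then be else if y == m.+3 then ga else 0).
Proof. by rewrite /NF /= eqxx. Qed.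

Lemma DotC_sym S (h : nat -> nat -> C) a b c : DotC m S h a b c -> DotC m S h b a c.
Proof.
rewrite /DotC => H.
rewrite [(b + a)%N]addnC.
have -> : (S && (b == m.+3) && (a == m.+3)) = (S && (a == m.+3) && (b == m.+3)).
  by clear H; case: S; case: (a == _); case: (b == _).
by rewrite H addrC.
Qed.

Lemma NF_guard (G : bool) x y : (G -> (x <= m.+2) && (y <= m.+2))%N ->
  (if G then g x y else 0) = if G && (x <= y)%N then (x.+1)%:R * l (y - x)%N else 0.
Proof.
by case: G => //= /(_ isT) /andP [hx hy]; rewrite NF_mid.
Qed.

Lemma dot_back S : al = - (if S then l m.+3 else 0) ->
  (S -> ga + ga = (m.+3)%:R * l 0%N) ->
  forall a b c, (a < n)%N -> (b < n)%N -> (c < n)%N -> DotC m S g a b c.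
Proof.
move=> hal hga.
have cAB : forall a b c, (a <= m.+2)%N -> (b <= m.+2)%N -> (c < n)%N -> DotC m S g a b c.
  move=> a b c ha hb hc; rewrite /DotC; rif.
  have [->|hc3] := eqVneq c m.+3.
    rif; case: ifP => h; rewrite ?NF_mid_last ?addr0 //; lia.
  rewrite (@NF_guard _ (a + b + 1)%N c); last by lia.
  rewrite (@NF_guard _ a (c - b - 1)%N); last by lia.
  rewrite (@NF_guard _ b (c - a - 1)%N); last by lia.
  case: (leqP (a + b + 1) c) => h; rif; last by rewrite !addr0.
  have -> : (c - b - 1 - a = c - (a + b + 1))%N by lia.
  have -> : (c - a - 1 - b = c - (a + b + 1))%N by lia.
  rewrite !addr0 -mulrDl -natrD; congr (_%:R * _); lia.
have cB : forall b c, (b <= m.+2)%N -> (c < n)%N -> DotC m S g m.+3 b c.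
  move=> b c hb hc; rewrite /DotC; rif; rewrite NF_last.
  have [->|hb0] := eqVneq b 0%N.
    have [->|hc2] := eqVneq c m.+2.
      rif; rewrite NF_0 hal; case: S {hga hal cAB} => /=; rewrite ?eqxx /=; ring.
    case: ifP => h; rif; case: S {hga hal cAB} => /=; ring.
  rewrite (@NF_mid_last b); last by lia.
  case: ifP => h; rif; case: S {hga hal cAB} => /=; rewrite ?if_same; ring.
have cD : forall c, (c < n)%N -> DotC m S g m.+3 m.+3 c.
  move=> c hc; rewrite /DotC !eqxx /=.
  case: S hal hga {cAB cB} => /= hal hga; last by rif; ring.
  rif.
  have [->|hc3] := eqVneq c m.+3.
    rewrite NF_mid_last; [|lia]; rif; ring.
  rewrite NF_mid; [|lia|lia]; rewrite NF_last.
  have [->|hc2] := eqVneq c m.+2.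
    rif; rewrite subnn -(hga isT); ring.
  rif; ring.
move=> a b c ha hb hc.
have [->|ha3] := eqVneq a m.+3.
  have [->|hb3] := eqVneq b m.+3; first exact: cD.
  apply: cB => //; lia.
have [->|hb3] := eqVneq b m.+3.
  apply: DotC_sym; apply: cB => //; lia.
apply: cAB => //; lia.
Qed.

Lemma NF_mid_0 x : (1 <= x <= m.+2)%N -> g x 0 = 0.
Proof. by move=> hx; rewrite NF_mid; [rif| lia | lia]. Qed.

Lemma br_back (T : bool) t :
  (T -> forall c, (c < n)%N -> g t c = (c == t)%:R * (l 0%N + ga)) ->
  forall a b c, (a < n)%N -> (b < n)%N -> (c < n)%N -> BrC m T t g a b c.
Proof.
move=> hT a b c ha hb hc; rewrite /BrC.
case: T hT => /= hT; last by rewrite mul0r mulr0.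
have [?|ha0] := eqVneq a 0%N; [subst a|].
  have [?|hb3] := eqVneq b m.+3; [subst b|].
    rewrite ?eqxx /= (hT isT c hc) NF_0 NF_last ?eqxx /=; rif; ring.
  have [?|hb0] := eqVneq b 0%N; [subst b|].
    rif; rewrite ?eqxx /=; ring.
  rif; rewrite NF_mid_last; [ring|lia].
have [?|ha3] := eqVneq a m.+3; [subst a|].
  have [?|hb0] := eqVneq b 0%N; [subst b|].
    rewrite ?eqxx /= (hT isT c hc) NF_0 NF_last ?eqxx /=; rif; ring.
  have [?|hb3] := eqVneq b m.+3; [subst b|].
    rif; rewrite ?eqxx /=; ring.
  rif; rewrite NF_mid_0; [ring|lia].
have [?|hb0] := eqVneq b 0%N; [subst b|].
  rif; rewrite NF_mid_last; [ring|lia].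
have [?|hb3] := eqVneq b m.+3; [subst b|].
  rif; rewrite NF_mid_0; [ring|lia].
rif; ring.
Qed.

End Back.




Section Fwd.
Variable m : nat.
Local Notation n := m.+4.
Variables (S T : bool) (t : nat) (g : nat -> nat -> C).
Hypothesis HD : forall a b c, (a < n)%N -> (b < n)%N -> (c < n)%N -> DotC m S g a b c.
Hypothesis HB : forall a b c, (a < n)%N -> (b < n)%N -> (c < n)%N -> BrC m T t g a b c.

Lemma fwd_mid_aux a : (a <= m.+2)%N -> forall c, (c < n)%N -> (1 <= a)%N || (c <= m.+2)%N ->
   g a c = if ((a <= c) && (c <= m.+2))%N then (a.+1)%:R * g 0%N (c - a)%N else 0.
Proof.
elim: a => [_ c hc /= hc2|a IH ha c hc _].
  by rewrite hc2 subn0 mul1r.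
have := HD (a:=a) (b:=0) (c:=c); rewrite /DotC addn0 addn1 subn0 add0n => H.
have {H} := H ltac:(lia) ltac:(lia) hc.
rif.
have [?|hc3] := eqVneq c m.+3; [subst c|].
  by rif; rewrite !addr0.
have [?|hc0] := eqVneq c 0%N; [subst c|].
  by rif; rewrite !addr0.
rewrite (IH ltac:(lia) (c - 1)%N ltac:(lia) ltac:(lia)).
rewrite addr0 => ->.
case: (leqP a.+1 c) => h; rif; last by rewrite !addr0.
have -> : (c - 1 - a = c - a.+1)%N by lia.
have -> : (c - a - 1 = c - a.+1)%N by lia.
rewrite !addr0 [in RHS]mulrSr; ring.
Qed.

Lemma fwd_mid a c : (1 <= a <= m.+2)%N -> (c < n)%N ->
  g a c = if ((a <= c) && (c <= m.+2))%N then (a.+1)%:R * g 0%N (c - a)%N else 0.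
Proof. by move=> ha hc; apply: fwd_mid_aux => //; lia. Qed.

Lemma fwd_low c : (c <= m)%N -> g m.+3 c = 0.
Proof.
move=> hc.
have := HD (a:=0) (b:=m.+3) (c:=c.+1); rewrite /DotC => H.
have {H} := H ltac:(lia) ltac:(lia) ltac:(lia).
rif.
rewrite (_ : (c.+1 - 0 - 1)%N = c); last lia.
by rewrite !add0r addr0 => <-.
Qed.

Lemma fwd_al : g m.+3 m.+1 = - (if S then g 0%N m.+3 else 0).
Proof.
have := HD (a:=0) (b:=m.+3) (c:=m.+2); rewrite /DotC => H.
have {H} := H ltac:(lia) ltac:(lia) ltac:(lia).
rif; rewrite (_ : (m.+2 - 0 - 1)%N = m.+1); last lia.
rewrite !eqxx /= !add0r addr0 !andbT => /esym/eqP; rewrite addr_eq0 => /eqP H.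
by rewrite H opprK.
Qed.

Lemma fwd_ga : S -> g m.+3 m.+3 + g m.+3 m.+3 = (m.+3)%:R * g 0%N 0%N.
Proof.
move=> hS.
have := HD (a:=m.+3) (b:=m.+3) (c:=m.+2); rewrite /DotC hS !eqxx /= => H.
have {H} := H ltac:(lia) ltac:(lia) ltac:(lia).
rif; rewrite fwd_mid; [|lia|lia]; rif; rewrite subnn !add0r => ->.
by [].
Qed.

Lemma fwd_br : T -> forall c, (c < n)%N -> g t c = (c == t)%:R * (g 0%N 0%N + g m.+3 m.+3).
Proof.
move=> hT c hc.
have := HB (a:=0) (b:=m.+3) (c:=c); rewrite /BrC hT !eqxx /= => H.
have {H} := H ltac:(lia) ltac:(lia) hc.
rif; rewrite subr0 mul1r => ->; congr (_ * _); ring.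
Qed.

Lemma fwd_NF x y : (x < n)%N -> (y < n)%N ->
  g x y = NF m (g 0%N) (g m.+3 m.+1) (g m.+3 m.+2) (g m.+3 m.+3) x y.
Proof.
move=> hx hy.
have [?|hx0] := eqVneq x 0%N; [subst x; by rewrite NF_0|].
have [?|hx3] := eqVneq x m.+3; [subst x|].
  rewrite NF_last.
  have [?|h1] := eqVneq y m.+1; [by subst y|].
  have [?|h2] := eqVneq y m.+2; [by subst y|].
  have [?|h3] := eqVneq y m.+3; [by subst y|].
  rewrite fwd_low //; lia.
rewrite fwd_mid; [|lia|lia].
have [?|h3] := eqVneq y m.+3; [subst y|].
  by rewrite NF_mid_last; [rif|lia].
rewrite NF_mid; [|lia|lia]; rif.
by case: (leqP x y) => h; rif.
Qed.

End Fwd.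




Ltac rb := repeat match goal with |- context[nat_of_bool ?b] =>
   lazymatch b with true => fail | false => fail | _ =>
   let E := fresh "E" in
   first [ (have E : b = true by lia); rewrite E; clear E
         | (have E : b = false by lia); rewrite E; clear E ] end end; simpl.

Section Asm.
Variable m : nat.
Local Notation n := m.+4.

Definition NFM (l : nat -> C) (al be ga : C) : 'M[C]_n :=
  \matrix_(i, j) NF m l al be ga i j.

Lemma f_NFM l al be ga x y : (x < n)%N -> (y < n)%N ->
  f (NFM l al be ga) x y = NF m l al be ga x y.
Proof. by move=> hx hy; rewrite /f mxE !inordK. Qed.

Lemma NFM_eq (A : 'M[C]_n) l al be ga :
  (forall x y, (x < n)%N -> (y < n)%N -> f A x y = NF m l al be ga x y) ->
  A = NFM l al be ga.
Proof.
move=> H; apply/matrixP => i j; rewrite fE mxE H //.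
Qed.

Lemma NFM_ext l1 l2 al be ga : (forall j, (j < n)%N -> l1 j = l2 j) ->
  NFM l1 al be ga = NFM l2 al be ga.
Proof.
move=> H; apply/matrixP => i j; rewrite !mxE /NF.
have hj := ltn_ord j.
case: ifP => _; first exact: H.
case: ifP => _ //; case: ifP => _ //; rewrite H //; lia.
Qed.

Lemma NFM_lin a l1 l2 l al1 al2 al be1 be2 be ga1 ga2 ga :
  (forall j, l j = a * l1 j + l2 j) -> al = a * al1 + al2 -> be = a * be1 + be2 ->
  ga = a * ga1 + ga2 ->
  NFM l al be ga = a *: NFM l1 al1 be1 ga1 + NFM l2 al2 be2 ga2.
Proof.
move=> hl -> -> ->; apply/matrixP => i j; rewrite !mxE /NF.
case: ifP => _; first exact: hl.
case: ifP => _.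
  case: ifP => _ //; case: ifP => _ //; case: ifP => _ //; ring.
case: ifP => _; last ring.
rewrite hl; ring.
Qed.

Lemma ifg_ext (g1 g2 : nat -> nat -> C) (G : bool) x y :
  (forall x y, (x < n)%N -> (y < n)%N -> g1 x y = g2 x y) ->
  (G -> (x < n) && (y < n))%N ->
  (if G then g1 x y else 0) = (if G then g2 x y else 0).
Proof. by move=> H; case: G => // /(_ isT) /andP [hx hy]; rewrite H. Qed.

Lemma DotC_ext S (g1 g2 : nat -> nat -> C) a b c :
  (forall x y, (x < n)%N -> (y < n)%N -> g1 x y = g2 x y) ->
  (a < n)%N -> (b < n)%N -> (c < n)%N ->
  DotC m S g1 a b c -> DotC m S g2 a b c.
Proof.
move=> H ha hb hc; rewrite /DotC.
rewrite (@ifg_ext g1 g2 _ (a + b + 1)%N c) //; last by lia.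
rewrite (@ifg_ext g1 g2 _ m.+2 c) //; last by lia.
rewrite (@ifg_ext g1 g2 _ a (c - b - 1)%N) //; last by lia.
rewrite (@ifg_ext g1 g2 _ a m.+3) //; last by lia.
rewrite (@ifg_ext g1 g2 _ b (c - a - 1)%N) //; last by lia.
rewrite (@ifg_ext g1 g2 _ b m.+3) //; last by lia.
Qed.

Lemma BrC_ext T t (g1 g2 : nat -> nat -> C) a b c :
  (forall x y, (x < n)%N -> (y < n)%N -> g1 x y = g2 x y) ->
  (t < n)%N -> (a < n)%N -> (b < n)%N -> (c < n)%N ->
  BrC m T t g1 a b c -> BrC m T t g2 a b c.
Proof.
move=> H ht ha hb hc; rewrite /BrC.
by rewrite !H //; lia.
Qed.

Lemma deriv_back p l al be ga :
  al = - (if isS p then l m.+3 else 0) ->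
  (isS p -> ga + ga = (m.+3)%:R * l 0%N) ->
  (Tp p -> forall c, (c < n)%N -> NF m l al be ga (tp m p) c = (c == tp m p)%:R * (l 0%N + ga)) ->
  is_derivation p (NFM l al be ga).
Proof.
move=> hal hga hT; apply/deriv_iff => a b c ha hb hc.
have E : forall x y, (x < n)%N -> (y < n)%N -> NF m l al be ga x y = f (NFM l al be ga) x y.
  by move=> x y hx hy; rewrite f_NFM.
split.
  by apply: (DotC_ext E) => //; apply: dot_back.
by apply: (BrC_ext E) => //; [apply: tp_lt | apply: br_back].
Qed.

Lemma deriv_fwd p A : is_derivation p A ->
  A = NFM (f A 0%N) (f A m.+3 m.+1) (f A m.+3 m.+2) (f A m.+3 m.+3) /\
  f A m.+3 m.+1 = - (if isS p then f A 0%N m.+3 else 0) /\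
  (isS p -> f A m.+3 m.+3 + f A m.+3 m.+3 = (m.+3)%:R * f A 0%N 0%N) /\
  (Tp p -> forall c, (c < n)%N -> f A (tp m p) c = (c == tp m p)%:R * (f A 0%N 0%N + f A m.+3 m.+3)).
Proof.
move/deriv_iff => H.
have HD : forall a b c, (a < n)%N -> (b < n)%N -> (c < n)%N -> DotC m (isS p) (f A) a b c.
  by move=> a b c ha hb hc; case: (H a b c ha hb hc).
have HB : forall a b c, (a < n)%N -> (b < n)%N -> (c < n)%N -> BrC m (Tp p) (tp m p) (f A) a b c.
  by move=> a b c ha hb hc; case: (H a b c ha hb hc).
split; first by apply: NFM_eq => x y hx hy; apply: (fwd_NF HD).
split; first exact: (fwd_al HD).
split; first exact: (fwd_ga HD).
exact: (fwd_br HB).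
Qed.

Lemma phi_coord (A : 'M[C]_n) k (c : 'I_n) : (1 <= k <= n)%N ->
  (phi_e A k) 0 c = f A (k - 1)%N c.
Proof.
move=> hk; rewrite /phi_e mxE.
under eq_bigr do rewrite eE.
rewrite (@sum_deltaP' m _ _ (k - 1)%N true); first last.
- by lia.
- by move=> i; have := ltn_ord i; lia.
by rewrite fEl.
Qed.

Lemma sum_e_coord lo hi (w : nat -> C) (c : 'I_n) :
  (\sum_(lo <= k < hi) w k *: e n k) 0 c = if (lo <= c.+1 < hi)%N then w c.+1 else 0.
Proof.
rewrite summxE.
under eq_big_nat => k _ do rewrite mxE eE mulr_natr mulrb eq_sym.
by rewrite -big_mkcond big_nat1_eq.
Qed.

Lemma e_coord k (c : 'I_n) : e n k 0 c = (c.+1 == k)%:R.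
Proof. exact: eE. Qed.

Variables (lam : nat -> C) (al be ga : C).
Local Notation A := (NFM (fun j => lam j.+1) al be ga).

Lemma phi1 : phi_e A 1 = \sum_(1 <= k < n.+1) lam k *: e n k.
Proof.
apply/rowP => c; have hc := ltn_ord c.
rewrite phi_coord // sum_e_coord f_NFM; [|lia|lia]; rewrite /NF /=; by rif.
Qed.

Lemma phi1' : lam 1%N = 0 -> phi_e A 1 = \sum_(2 <= k < n.+1) lam k *: e n k.
Proof.
move=> h0; apply/rowP => c; have hc := ltn_ord c.
rewrite phi_coord // sum_e_coord f_NFM; [|lia|lia]; rewrite /NF /=.
have [->|hc0] := eqVneq (c : nat) 0%N; first by rewrite /= h0.
by rif.
Qed.

Lemma phiI i : (2 <= i <= n.-1)%N ->
  phi_e A i = \sum_(i <= k < n) (i%:R * lam (k - i + 1)%N) *: e n k.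
Proof.
move=> hi; apply/rowP => c; have hc := ltn_ord c.
have {}hi : (2 <= i <= m.+3)%N by exact: hi.
rewrite phi_coord; last by lia.
rewrite sum_e_coord f_NFM; [|lia|lia].
rewrite /NF; rif.
case: (leqP i c.+1) => h; rif; last by [].
have [->|hc3] := eqVneq (c : nat) m.+3; rif; first by [].
rewrite (_ : (i - 1).+1 = i); last by lia.
by rewrite (_ : (c - (i - 1)).+1 = (c.+1 - i + 1)%N); last by lia.
Qed.

Lemma phiI' i : lam 1%N = 0 -> (2 <= i <= n.-1)%N ->
  phi_e A i = \sum_(i.+1 <= k < n) (i%:R * lam (k - i + 1)%N) *: e n k.
Proof.
move=> h0 hi; rewrite phiI //; apply/rowP => c; rewrite !sum_e_coord.
have {}hi : (2 <= i <= m.+3)%N by exact: hi.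
have [hc|hc] := eqVneq (c.+1) i.
  by rewrite -hc ltnn leqnn /= subnn h0 mulr0; rif.
by rewrite (_ : (i <= c.+1)%N = (i < c.+1)%N); last by lia.
Qed.

Lemma phiN : phi_e A n = al *: e n (n - 2)%N + be *: e n n.-1 + ga *: e n n.
Proof.
apply/rowP => c; have hc := ltn_ord c.
rewrite phi_coord; last by lia.
rewrite f_NFM; [|lia|lia].
rewrite !mxE ?eE /NF /=.
rewrite (_ : (m.+4 - 2 = m.+2)%N); last by lia.
rewrite (_ : (m.+4 - 1 = m.+3)%N); last by lia.
rewrite eqxx.
have [->|h1] := eqVneq (c : nat) m.+1; [rif; rb; ring|].
have [->|h2] := eqVneq (c : nat) m.+2; [rif; rb; ring|].
have [->|h3] := eqVneq (c : nat) m.+3; [rif; rb; ring|].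
rif; rb; ring.
Qed.

End Asm.


Lemma dim_gen m p d (P : {linear 'rV[C]_d -> 'M[C]_(m.+4)}) (read : 'M[C]_(m.+4) -> 'rV[C]_d) :
  cancel P read -> (forall A, is_derivation p A <-> exists v, A = P v) ->
  dim_Der m.+4 p d.
Proof.
move=> PK H; exists (limg (linfun P)); split.
  move=> A; rewrite H; split.
    by case=> v ->; rewrite -lfunE; apply: memv_img; apply: memvf.
  by case/memv_imgP => v _ ->; exists v; rewrite lfunE.
rewrite limg_dim_eq; last first.
  have /lker0P/eqP -> : injective (linfun P).
    by move=> u v; rewrite !lfunE => /(congr1 read); rewrite !PK.
  by rewrite capv0.
by rewrite dimvf /= dim_matrix; lia.
Qed.

Lemma A_lam m (A : 'M[C]_(m.+4)) l al be ga : A = NFM m l al be ga ->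
  A = NFM m (fun j => (fun k => l (k - 1)%N) j.+1) al be ga.
Proof. by move=> ->; apply: NFM_ext => j _; rewrite subn1. Qed.

Definition par11 m (v : 'rV[C]_((m.+4).+2)) : 'M[C]_(m.+4) :=
  NFM m (fun j => v 0 (inord j)) 0 (v 0 (inord m.+4)) (v 0 (inord (m.+4).+1)).

Lemma par11_lin m : linear (@par11 m).
Proof. by move=> a u v; apply: NFM_lin => *; rewrite ?mxE //; ring. Qed.

HB.instance Definition _ m := GRing.isLinear.Build C 'rV[C]_((m.+4).+2) 'M[C]_(m.+4) ( *:%R ) (@par11 m) (@par11_lin m).

Definition read11 m (A : 'M[C]_(m.+4)) : 'rV[C]_((m.+4).+2) :=
  \row_(k < (m.+4).+2) (if (k < m.+4)%N then f A 0%N k else if k == m.+4 :> nat then f A m.+3 m.+2 else f A m.+3 m.+3).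

Lemma read11K m : cancel (@par11 m) (@read11 m).
Proof.
move=> v; apply/rowP => k; rewrite mxE; have hk := ltn_ord k.
case: ifP => h; first by rewrite f_NFM // NF_0 inord_val.
rewrite !f_NFM // !NF_last /=; case: ifP => h2; rif.
  by congr (v 0 _); apply: val_inj; rewrite /= inordK //; move/eqP: h2.
congr (v 0 _); apply: val_inj; rewrite /= inordK //; lia.
Qed.

Lemma derivs11 m A : is_derivation P11 A <-> exists v, A = @par11 m v.
Proof.
split.
  move=> /deriv_fwd [EA [hal _]]; exists (read11 A).
  rewrite {1}EA /par11 hal /= oppr0.
  rewrite !mxE /= !inordK //.
  rif; apply: NFM_ext => j hj; rewrite mxE inordK; [by rif|lia].
case=> v ->; apply: deriv_back => //; by rewrite oppr0.
Qed.

Lemma caseA m : let n := m.+4 in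
  ((forall A : 'M[C]_n, is_derivation P11 A ->
     exists (lam : nat -> C) (a b : C),
       phi_e A 1 = \sum_(1 <= k < n.+1) lam k *: e n k /\
       (forall i, (2 <= i <= n.-1)%N ->
          phi_e A i = \sum_(i <= k < n) (i%:R * lam (k - i + 1)%N) *: e n k) /\
       phi_e A n = a *: e n n.-1 + b *: e n n)
   /\ dim_Der n P11 (n + 2)).
Proof.
move=> n; split.
  move=> A /deriv_fwd [EA [hal _]]; have EA' := A_lam EA.
  exists (fun k => f A 0%N (k - 1)%N), (f A m.+3 m.+2), (f A m.+3 m.+3).
  split; first by have := @phi1 m (fun k => f A 0%N (k - 1)%N) (f A m.+3 m.+1) (f A m.+3 m.+2) (f A m.+3 m.+3); rewrite -EA'.
  split.
    by move=> i hi; have := @phiI m (fun k => f A 0%N (k - 1)%N) (f A m.+3 m.+1) (f A m.+3 m.+2) (f A m.+3 m.+3) i hi; rewrite -EA'.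
  have := @phiN m (fun k => f A 0%N (k - 1)%N) (f A m.+3 m.+1) (f A m.+3 m.+2) (f A m.+3 m.+3); rewrite -EA' => ->.
  by rewrite hal /= oppr0 scale0r add0r.
rewrite /n addn2; apply: (dim_gen (read := @read11 m) (P := @par11 m)); [exact: read11K | exact: derivs11].
Qed.

Lemma NFM_congr m l1 l2 al1 al2 be1 be2 ga1 ga2 :
  (forall j, (j < m.+4)%N -> l1 j = l2 j) -> al1 = al2 -> be1 = be2 -> ga1 = ga2 ->
  NFM m l1 al1 be1 ga1 = NFM m l2 al2 be2 ga2.
Proof. by move=> H -> -> ->; apply: NFM_ext. Qed.

Lemma f22 m (A : 'M[C]_(m.+4)) l al be ga : A = NFM m l al be ga -> f A m.+2 m.+2 = (m.+3)%:R * l 0%N.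
Proof. by move=> ->; rewrite f_NFM // /NF /=; rif; rewrite subnn. Qed.

Definition par12 m (v : 'rV[C]_(m.+4)) : 'M[C]_(m.+4) :=
  NFM m (fun j => if j == 0%N then 0 else v 0 (inord j.-1)) 0 0 (v 0 (inord m.+3)).

Lemma par12_lin m : linear (@par12 m).
Proof.
move=> a u v; apply: NFM_lin => *; rewrite ?mxE //; try ring.
by case: ifP => _; rewrite ?mxE; ring.
Qed.

HB.instance Definition _ m := GRing.isLinear.Build C 'rV[C]_(m.+4) 'M[C]_(m.+4) ( *:%R ) (@par12 m) (@par12_lin m).

Definition read12 m (A : 'M[C]_(m.+4)) : 'rV[C]_(m.+4) :=
  \row_(k < m.+4) (if (k <= m.+2)%N then f A 0%N k.+1 else f A m.+3 m.+3).

Lemma read12K m : cancel (@par12 m) (@read12 m).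
Proof.
move=> v; apply/rowP => k; rewrite mxE; have hk := ltn_ord k.
case: ifP => h; first by rewrite f_NFM // NF_0 /= inord_val.
rewrite !f_NFM // !NF_last /=; rif.
congr (v 0 _); apply: val_inj; rewrite /= inordK //; lia.
Qed.

Lemma derivs12 m A : is_derivation P12 A <-> exists v, A = @par12 m v.
Proof.
split.
  move=> /deriv_fwd [EA [hal [_ hT]]]; exists (read12 A).
  have h0 : f A 0%N 0%N = 0.
    have := hT isT m.+3 ltac:(lia); rewrite /= eqxx mul1r => H.
    by rewrite -[f A 0%N 0%N](addrK (f A m.+3 m.+3)) -H subrr.
  have hb : f A m.+3 m.+2 = 0.
    by have := hT isT m.+2 ltac:(lia); rewrite /=; rb; rewrite mul0r.
  rewrite {1}EA /par12; apply: NFM_congr.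
  - move=> j hj; case: ifP => /eqP hj0; first by rewrite hj0.
    by rewrite mxE inordK; [rif; rewrite prednK //; lia| lia].
  - by rewrite hal /= oppr0.
  - by [].
  - by rewrite mxE inordK //; rif.
case=> v ->; apply: deriv_back => //=; first by rewrite oppr0.
move=> _ c hc; rewrite NF_last /=.
have [->|h1] := eqVneq c m.+3; first by rif; rb; ring.
rif; rb; by rewrite !if_same mul0r.
Qed.

Lemma caseB m : let n := m.+4 in
  ((forall A : 'M[C]_n, is_derivation P12 A ->
     exists (lam : nat -> C) (b : C),
       phi_e A 1 = \sum_(2 <= k < n.+1) lam k *: e n k /\
       (forall i, (2 <= i <= n.-1)%N ->
          phi_e A i = \sum_(i.+1 <= k < n) (i%:R * lam (k - i + 1)%N) *: e n k) /\
       phi_e A n = b *: e n n)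
   /\ dim_Der n P12 n).
Proof.
move=> n; split; last first.
  apply: (dim_gen (read := @read12 m) (P := @par12 m)); [exact: read12K | exact: derivs12].
move=> A hA.
move: hA => /deriv_fwd [EA [hal [_ hT]]]; have EA' := A_lam EA.
have h0 : f A 0%N 0%N = 0.
  have := hT isT m.+3 ltac:(lia); rewrite /= eqxx mul1r => H.
  by rewrite -[f A 0%N 0%N](addrK (f A m.+3 m.+3)) -H subrr.
have hb : f A m.+3 m.+2 = 0.
  by have := hT isT m.+2 ltac:(lia); rewrite /=; rb; rewrite mul0r.
exists (fun k => f A 0%N (k - 1)%N), (f A m.+3 m.+3).
split; first by have := @phi1' m (fun k => f A 0%N (k - 1)%N) (f A m.+3 m.+1) (f A m.+3 m.+2) (f A m.+3 m.+3) h0; rewrite -EA'.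
split.
  by move=> i hi; have := @phiI' m (fun k => f A 0%N (k - 1)%N) (f A m.+3 m.+1) (f A m.+3 m.+2) (f A m.+3 m.+3) i h0 hi; rewrite -EA'.
have := @phiN m (fun k => f A 0%N (k - 1)%N) (f A m.+3 m.+1) (f A m.+3 m.+2) (f A m.+3 m.+3); rewrite -EA' => ->.
by rewrite hal hb /= oppr0 !scale0r !add0r.
Qed.

Definition par13 m (v : 'rV[C]_((m.+4).+1)) : 'M[C]_(m.+4) :=
  NFM m (fun j => v 0 (inord j)) 0 (v 0 (inord m.+4)) ((m.+2)%:R * v 0 (inord 0)).

Lemma par13_lin m : linear (@par13 m).
Proof. by move=> a u v; apply: NFM_lin => *; rewrite ?mxE //; ring. Qed.

HB.instance Definition _ m := GRing.isLinear.Build C 'rV[C]_((m.+4).+1) 'M[C]_(m.+4) ( *:%R ) (@par13 m) (@par13_lin m).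

Definition read13 m (A : 'M[C]_(m.+4)) : 'rV[C]_((m.+4).+1) :=
  \row_(k < (m.+4).+1) (if (k < m.+4)%N then f A 0%N k else f A m.+3 m.+2).

Lemma read13K m : cancel (@par13 m) (@read13 m).
Proof.
move=> v; apply/rowP => k; rewrite mxE; have hk := ltn_ord k.
case: ifP => h; first by rewrite f_NFM // NF_0 inord_val.
rewrite !f_NFM // !NF_last /=; rif.
congr (v 0 _); apply: val_inj; rewrite /= inordK //; lia.
Qed.

Lemma derivs13 m A : is_derivation P13 A <-> exists v, A = @par13 m v.
Proof.
split.
  move=> /deriv_fwd [EA [hal [_ hT]]]; exists (read13 A).
  have hg : f A m.+3 m.+3 = (m.+2)%:R * f A 0%N 0%N.
    have := hT isT m.+2 ltac:(lia); rewrite /= eqxx mul1r (f22 EA) => H.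
    by rewrite -[f A m.+3 m.+3](addKr (f A 0%N 0%N)) -H; ring.
  rewrite {1}EA /par13; apply: NFM_congr.
  - by move=> j hj; rewrite mxE inordK; [rif| lia].
  - by rewrite hal /= oppr0.
  - by rewrite mxE inordK //; rif.
  - by rewrite hg mxE inordK //; rif.
case=> v ->; apply: deriv_back => //=; first by rewrite oppr0.
move=> _ c hc; rewrite /NF /=.
have [->|h1] := eqVneq c m.+2; first by rif; rb; rewrite subnn; ring.
rif; rb; by rewrite mul0r.
Qed.

Lemma caseC m : let n := m.+4 in
  ((forall A : 'M[C]_n, is_derivation P13 A ->
     exists (lam : nat -> C) (a : C),
       phi_e A 1 = \sum_(1 <= k < n.+1) lam k *: e n k /\
       (forall i, (2 <= i <= n.-1)%N ->
          phi_e A i = \sum_(i <= k < n) (i%:R * lam (k - i + 1)%N) *: e n k) /\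
       phi_e A n = a *: e n n.-1 + ((n - 2)%:R * lam 1%N) *: e n n)
   /\ dim_Der n P13 (n + 1)).
Proof.
move=> n; split; last first.
  rewrite /n addn1; apply: (dim_gen (read := @read13 m) (P := @par13 m)); [exact: read13K | exact: derivs13].
move=> A /deriv_fwd [EA [hal [_ hT]]]; have EA' := A_lam EA.
have hg : f A m.+3 m.+3 = (m.+2)%:R * f A 0%N 0%N.
  have := hT isT m.+2 ltac:(lia); rewrite /= eqxx mul1r (f22 EA) => H.
  by rewrite -[f A m.+3 m.+3](addKr (f A 0%N 0%N)) -H; ring.
exists (fun k => f A 0%N (k - 1)%N), (f A m.+3 m.+2).
split; first by have := @phi1 m (fun k => f A 0%N (k - 1)%N) (f A m.+3 m.+1) (f A m.+3 m.+2) (f A m.+3 m.+3); rewrite -EA'.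
split.
  by move=> i hi; have := @phiI m (fun k => f A 0%N (k - 1)%N) (f A m.+3 m.+1) (f A m.+3 m.+2) (f A m.+3 m.+3) i hi; rewrite -EA'.
have := @phiN m (fun k => f A 0%N (k - 1)%N) (f A m.+3 m.+1) (f A m.+3 m.+2) (f A m.+3 m.+3); rewrite -EA' => ->.
rewrite hal hg /= oppr0 !scale0r !add0r.
by rewrite (_ : (m.+4 - 2 = m.+2)%N) //; lia.
Qed.

Definition par14 m (v : 'rV[C]_((m.+4).+1)) : 'M[C]_(m.+4) :=
  NFM m (fun j => v 0 (inord j)) (- v 0 (inord m.+3)) (v 0 (inord m.+4))
    ((m.+3)%:R / 2%:R * v 0 (inord 0)).

Lemma par14_lin m : linear (@par14 m).
Proof. by move=> a u v; apply: NFM_lin => *; rewrite ?mxE //; ring. Qed.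

HB.instance Definition _ m := GRing.isLinear.Build C 'rV[C]_((m.+4).+1) 'M[C]_(m.+4) ( *:%R ) (@par14 m) (@par14_lin m).

Lemma read14K m : cancel (@par14 m) (@read13 m).
Proof.
move=> v; apply/rowP => k; rewrite mxE; have hk := ltn_ord k.
case: ifP => h; first by rewrite f_NFM // NF_0 inord_val.
rewrite !f_NFM // !NF_last /=; rif.
congr (v 0 _); apply: val_inj; rewrite /= inordK //; lia.
Qed.

Lemma two_neq0 : (2%:R : C) != 0.
Proof. by rewrite pnatr_eq0. Qed.

Lemma half_eq (x y : C) : x + x = y -> x = y / 2%:R.
Proof. by move=> <-; field. Qed.

Lemma derivs14 m A : is_derivation P14 A <-> exists v, A = @par14 m v.
Proof.
split.
  move=> /deriv_fwd [EA [hal [hS _]]]; exists (read13 A).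
  have hg := half_eq (hS isT).
  rewrite {1}EA /par14; apply: NFM_congr.
  - by move=> j hj; rewrite mxE inordK; [rif| lia].
  - by rewrite hal /= mxE inordK //; rif.
  - by rewrite mxE inordK //; rif.
  - by rewrite hg mxE inordK //; rif; rewrite mulrAC.
case=> v ->; apply: deriv_back => //= _.
by field.
Qed.

Lemma caseD m : let n := m.+4 in
  ((forall A : 'M[C]_n, is_derivation P14 A ->
     exists (lam : nat -> C) (a : C),
       phi_e A 1 = \sum_(1 <= k < n.+1) lam k *: e n k /\
       (forall i, (2 <= i <= n.-1)%N ->
          phi_e A i = \sum_(i <= k < n) (i%:R * lam (k - i + 1)%N) *: e n k) /\
       phi_e A n = - lam n *: e n (n - 2) + a *: e n n.-1
                   + ((n.-1)%:R / 2%:R * lam 1%N) *: e n n)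
   /\ dim_Der n P14 (n + 1)).
Proof.
move=> n; split; last first.
  rewrite /n addn1; apply: (dim_gen (read := @read13 m) (P := @par14 m)); [exact: read14K | exact: derivs14].
move=> A /deriv_fwd [EA [hal [hS _]]]; have EA' := A_lam EA.
have hg := half_eq (hS isT).
exists (fun k => f A 0%N (k - 1)%N), (f A m.+3 m.+2).
split; first by have := @phi1 m (fun k => f A 0%N (k - 1)%N) (f A m.+3 m.+1) (f A m.+3 m.+2) (f A m.+3 m.+3); rewrite -EA'.
split.
  by move=> i hi; have := @phiI m (fun k => f A 0%N (k - 1)%N) (f A m.+3 m.+1) (f A m.+3 m.+2) (f A m.+3 m.+3) i hi; rewrite -EA'.
have := @phiN m (fun k => f A 0%N (k - 1)%N) (f A m.+3 m.+1) (f A m.+3 m.+2) (f A m.+3 m.+3); rewrite -EA' => ->.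
rewrite hal hg /=.
rewrite (_ : (m.+4 - 1 = m.+3)%N); last by lia.
by rewrite mulrAC.
Qed.

Definition par15 m (v : 'rV[C]_(m.+4)) : 'M[C]_(m.+4) :=
  NFM m (fun j => if j == 0%N then 0 else v 0 (inord j.-1)) (- v 0 (inord m.+2)) (v 0 (inord m.+3)) 0.

Lemma par15_lin m : linear (@par15 m).
Proof.
move=> a u v; apply: NFM_lin => *; rewrite ?mxE //; try ring.
by case: ifP => _; rewrite ?mxE; ring.
Qed.

HB.instance Definition _ m := GRing.isLinear.Build C 'rV[C]_(m.+4) 'M[C]_(m.+4) ( *:%R ) (@par15 m) (@par15_lin m).

Definition read15 m (A : 'M[C]_(m.+4)) : 'rV[C]_(m.+4) :=
  \row_(k < m.+4) (if (k <= m.+2)%N then f A 0%N k.+1 else f A m.+3 m.+2).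

Lemma read15K m : cancel (@par15 m) (@read15 m).
Proof.
move=> v; apply/rowP => k; rewrite mxE; have hk := ltn_ord k.
case: ifP => h; first by rewrite f_NFM // NF_0 /= inord_val.
rewrite !f_NFM // !NF_last /=; rif.
congr (v 0 _); apply: val_inj; rewrite /= inordK //; lia.
Qed.

Lemma P15_consts m (A : 'M[C]_(m.+4)) l al be ga : A = NFM m l al be ga ->
  l 0%N = f A 0%N 0%N -> ga = f A m.+3 m.+3 ->
  f A m.+3 m.+3 + f A m.+3 m.+3 = (m.+3)%:R * f A 0%N 0%N ->
  f A m.+2 m.+2 = (m.+2 == m.+2)%:R * (f A 0%N 0%N + f A m.+3 m.+3) ->
  f A 0%N 0%N = 0 /\ f A m.+3 m.+3 = 0.
Proof.
move=> EA hl hga hS hT; rewrite (f22 EA) eqxx mul1r hl in hT.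
have hg : f A m.+3 m.+3 = f A 0%N 0%N.
  have : f A m.+3 m.+3 + f A m.+3 m.+3 = f A 0%N 0%N + f A m.+3 m.+3 by rewrite hS hT.
  by move/addIr.
rewrite hg in hS.
have : (m.+1)%:R * f A 0%N 0%N = 0.
  have : (m.+3)%:R * f A 0%N 0%N - (f A 0%N 0%N + f A 0%N 0%N) = 0 by rewrite hS subrr.
  by move=> <-; ring.
move/eqP; rewrite mulf_eq0 pnatr_eq0 /= => /eqP h0.
by rewrite hg h0.
Qed.

Lemma derivs15 m A : is_derivation P15 A <-> exists v, A = @par15 m v.
Proof.
split.
  move=> /deriv_fwd [EA [hal [hS hT]]]; exists (read15 A).
  have [h0 hg] := P15_consts EA erefl erefl (hS isT) (hT isT m.+2 ltac:(lia)).
  rewrite {1}EA /par15; apply: NFM_congr.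
  - move=> j hj; case: ifP => /eqP hj0; first by rewrite hj0.
    by rewrite mxE inordK; [rif; rewrite prednK //; lia| lia].
  - by rewrite hal /= mxE inordK //; rif.
  - by rewrite mxE inordK //; rif.
  - by rewrite hg.
case=> v ->; apply: deriv_back => //=.
  by rewrite mulr0 addr0.
move=> _ c hc; rewrite /NF /=.
have [->|h1] := eqVneq c m.+2; first by rif; rb; ring.
rif; rb; by rewrite mul0r.
Qed.

Lemma caseE m : let n := m.+4 in
  ((forall A : 'M[C]_n, is_derivation P15 A ->
     exists (lam : nat -> C) (a : C),
       phi_e A 1 = \sum_(2 <= k < n.+1) lam k *: e n k /\
       (forall i, (2 <= i <= n.-1)%N ->
          phi_e A i = \sum_(i.+1 <= k < n) (i%:R * lam (k - i + 1)%N) *: e n k) /\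
       phi_e A n = - lam n *: e n (n - 2) + a *: e n n.-1)
   /\ dim_Der n P15 n).
Proof.
move=> n; split; last first.
  apply: (dim_gen (read := @read15 m) (P := @par15 m)); [exact: read15K | exact: derivs15].
move=> A /deriv_fwd [EA [hal [hS hT]]]; have EA' := A_lam EA.
have [h0 hg] := P15_consts EA erefl erefl (hS isT) (hT isT m.+2 ltac:(lia)).
exists (fun k => f A 0%N (k - 1)%N), (f A m.+3 m.+2).
split; first by have := @phi1' m (fun k => f A 0%N (k - 1)%N) (f A m.+3 m.+1) (f A m.+3 m.+2) (f A m.+3 m.+3) h0; rewrite -EA'.
split.
  by move=> i hi; have := @phiI' m (fun k => f A 0%N (k - 1)%N) (f A m.+3 m.+1) (f A m.+3 m.+2) (f A m.+3 m.+3) i h0 hi; rewrite -EA'.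
have := @phiN m (fun k => f A 0%N (k - 1)%N) (f A m.+3 m.+1) (f A m.+3 m.+2) (f A m.+3 m.+3); rewrite -EA' => ->.
rewrite hal hg /= scale0r addr0.
by rewrite (_ : (m.+4 - 1 = m.+3)%N); last by lia.
Qed.

Theorem lemma5p2 (n : nat) (hn : (3 < n)%N) :
  (* (a) P_{1,1}^n *)
  ((forall A : 'M[C]_n, is_derivation P11 A ->
     exists (lam : nat -> C) (a b : C),
       phi_e A 1 = \sum_(1 <= k < n.+1) lam k *: e n k /\
       (forall i, (2 <= i <= n.-1)%N ->
          phi_e A i = \sum_(i <= k < n) (i%:R * lam (k - i + 1)%N) *: e n k) /\
       phi_e A n = a *: e n n.-1 + b *: e n n)
   /\ dim_Der n P11 (n + 2)) /\
  (* (b) P_{1,2}^n *)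
  ((forall A : 'M[C]_n, is_derivation P12 A ->
     exists (lam : nat -> C) (b : C),
       phi_e A 1 = \sum_(2 <= k < n.+1) lam k *: e n k /\
       (forall i, (2 <= i <= n.-1)%N ->
          phi_e A i = \sum_(i.+1 <= k < n) (i%:R * lam (k - i + 1)%N) *: e n k) /\
       phi_e A n = b *: e n n)
   /\ dim_Der n P12 n) /\
  (* (c) P_{1,3}^n *)
  ((forall A : 'M[C]_n, is_derivation P13 A ->
     exists (lam : nat -> C) (a : C),
       phi_e A 1 = \sum_(1 <= k < n.+1) lam k *: e n k /\
       (forall i, (2 <= i <= n.-1)%N ->
          phi_e A i = \sum_(i <= k < n) (i%:R * lam (k - i + 1)%N) *: e n k) /\
       phi_e A n = a *: e n n.-1 + ((n - 2)%:R * lam 1%N) *: e n n)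
   /\ dim_Der n P13 (n + 1)) /\
  (* (d) P_{1,4}^n *)
  ((forall A : 'M[C]_n, is_derivation P14 A ->
     exists (lam : nat -> C) (a : C),
       phi_e A 1 = \sum_(1 <= k < n.+1) lam k *: e n k /\
       (forall i, (2 <= i <= n.-1)%N ->
          phi_e A i = \sum_(i <= k < n) (i%:R * lam (k - i + 1)%N) *: e n k) /\
       phi_e A n = - lam n *: e n (n - 2) + a *: e n n.-1
                   + ((n.-1)%:R / 2%:R * lam 1%N) *: e n n)
   /\ dim_Der n P14 (n + 1)) /\
  (* (e) P_{1,5}^n *)
  ((forall A : 'M[C]_n, is_derivation P15 A ->
     exists (lam : nat -> C) (a : C),
       phi_e A 1 = \sum_(2 <= k < n.+1) lam k *: e n k /\
       (forall i, (2 <= i <= n.-1)%N ->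
          phi_e A i = \sum_(i.+1 <= k < n) (i%:R * lam (k - i + 1)%N) *: e n k) /\
       phi_e A n = - lam n *: e n (n - 2) + a *: e n n.-1)
   /\ dim_Der n P15 n).

Proof.
case: n hn => [|[|[|[|m]]]] // _.
split; first exact: (caseA m).
split; first exact: (caseB m).
split; first exact: (caseC m).
split; first exact: (caseD m).
exact: (caseE m).
Qed.
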